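(* Let $\mathbf V,\mathbf W$ be nonnegative arrays with $V_{1,1}=W_1=1$, $V_{n,k}>0$ for all $1\le k\le n$ and $W_s>0$ for all $s\ge1$, such that $\mathsf{Gibbs}_{[n]}(\mathbf V,\mathbf W)$ is a probability distribution for every $n$. Fix $n$, let $\Pi_{n+1}\sim\mathsf{Gibbs}_{[n+1]}(\mathbf V,\mathbf W)$, and let $\mathbf z=(z_1,\dots,z_{n+1})$ be its cluster membership vector, clusters labelled $1,2,\dots$ in order of first appearance. Given $\mathbf z_{1:n}=(z_1,\dots,z_n)$ with $k$ clusters of sizes $n_1,\dots,n_k$, one has $$\mathbb P(z_{n+1}=j\mid \mathbf z_{1:n})\propto\begin{cases} f(n_j), & j=1,\dots,k,\\ g(n,k), & j=k+1,\end{cases}$$ where $f(m)=W_{m+1}/W_m$ and $g(n,k)=V_{n+1,k+1}/V_{n+1,k}$. Moreover, $f$ is nondecreasing on $\mathbb N$ if and only if $\mathsf{Gibbs}_{[n]}(\mathbf V,\mathbf W)$ is balance-averse for every $n\ge1$, and $f$ is nonincreasing on $\mathbb N$ if and only if $\mathsf{Gibbs}_{[n]}(\mathbf V,\mathbf W)$ is balance-seeking for every $n\ge1$.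
   Context: For positive integers $k\le n$, $\mathcal I_n^k$ denotes the set of integer partitions of $n$ into $k$ parts, i.e. nonincreasing $k$-tuples $\mathbf n=(n_1,\dots,n_k)$ of positive integers with $\sum_j n_j=n$. For $\mathbf n,\mathbf n'\in\mathcal I_n^k$ write $\mathbf n\prec\mathbf n'$ if $\mathbf n\neq\mathbf n'$ and $\sum_{j=1}^J n_j\ge\sum_{j=1}^J n'_j$ for all $J=1,\dots,k$. A random partition $\Pi_n$ of $[n]$ is finitely exchangeable if its law is invariant under permutations of $[n]$; its EPPF is the symmetric function $p^{(n)}$ with $\mathbb P(\Pi_n=\{S_1,\dots,S_k\})=p^{(n)}(|S_1|,\dots,|S_k|)$. An EPPF is balance-averse if for all $k\le n$ and $\mathbf n,\mathbf n'\in\mathcal I_n^k$, $\mathbf n\prec\mathbf n'$ implies $p^{(n)}(\mathbf n)\ge p^{(n)}(\mathbf n')$; balance-seeking if it implies $p^{(n)}(\mathbf n)\le p^{(n)}(\mathbf n')$. $\Pi_n\sim\mathsf{Gibbs}_{[n]}(\mathbf V,\mathbf W)$ means $\Pi_n$ has EPPF $p^{(n)}(n_1,\dots,n_k)=V_{n,k}\prod_{j=1}^kW_{n_j}$. *)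

(* Defs.v *)
From HB Require Import structures.
From mathcomp Require Import all_boot all_order all_algebra.
Set Implicit Arguments. Unset Strict Implicit. Unset Printing Implicit Defensive.
Import Order.TTheory GRing.Theory Num.Theory.
Local Open Scope ring_scope.

Definition setpart (m : nat) (P : {set {set 'I_m}}) : bool :=
  partition P [set: 'I_m].

Definition gibbs_prob (R : nzRingType) (V : nat -> nat -> R) (W : nat -> R)
  (m : nat) (P : {set {set 'I_m}}) : R :=
  V m #|P| * \prod_(B in P) W #|B|.

Definition gibbs_is_prob (R : nzRingType) (V : nat -> nat -> R) (W : nat -> R)
  (m : nat) : Prop :=
  \sum_(P : {set {set 'I_m}} | setpart P) gibbs_prob V W P = 1.

Definition gibbs_Pr (R : nzRingType) (V : nat -> nat -> R) (W : nat -> R)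
  (m : nat) (E : pred {set {set 'I_m}}) : R :=
  \sum_(P : {set {set 'I_m}} | setpart P && E P) gibbs_prob V W P.

(* Cluster membership: the label (1,2,...) of the block containing i, blocks
   being labelled in order of first appearance, i.e. by the rank of their
   minimal element among the block minima. *)
Definition cluster_label (m : nat) (P : {set {set 'I_m}}) (i : 'I_m) : nat :=
  #|[set B in P | [exists x in B, [forall y in pblock P i, (x <= y)%N]]]|.

(* Event  z_{1:n} = w  for a partition of [n+1] (indices 0..n-1 are 1..n). *)
Definition prefix_event (n : nat) (w : seq nat) (P : {set {set 'I_n.+1}}) : bool :=
  [forall i : 'I_n.+1, (i < n)%N ==> (cluster_label P i == nth 0%N w i)].
Arguments prefix_event : clear implicits.

Definition cond_prob (R : fieldType) (V : nat -> nat -> R) (W : nat -> R)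
  (n : nat) (w : seq nat) (j : nat) : R :=
  gibbs_Pr V W (fun P : {set {set 'I_n.+1}} =>
                  prefix_event n w P && (cluster_label P ord_max == j))
  / gibbs_Pr V W (prefix_event n w).

Definition f_ratio (R : fieldType) (W : nat -> R) (m : nat) : R := W m.+1 / W m.
Definition g_ratio (R : fieldType) (V : nat -> nat -> R) (n k : nat) : R :=
  V n.+1 k.+1 / V n.+1 k.

Definition int_part (n k : nat) (s : seq nat) : bool :=
  [&& size s == k, all (fun x => 0 < x)%N s, sorted geq s & sumn s == n].

Definition prec_part (s s' : seq nat) : bool :=
  (s != s') &&
  all (fun J => sumn (take J s') <= sumn (take J s))%N (iota 1 (size s)).

Definition gibbs_eppf (R : nzRingType) (V : nat -> nat -> R) (W : nat -> R)
  (n : nat) (s : seq nat) : R :=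
  V n (size s) * \prod_(x <- s) W x.

Definition balance_averse (R : realDomainType) (p : seq nat -> R) (n : nat) : Prop :=
  forall (k : nat) (s s' : seq nat), int_part n k s -> int_part n k s' ->
    prec_part s s' -> p s' <= p s.

Definition balance_seeking (R : realDomainType) (p : seq nat -> R) (n : nat) : Prop :=
  forall (k : nat) (s s' : seq nat), int_part n k s -> int_part n k s' ->
    prec_part s s' -> p s <= p s'.

(* Main.v *)
Require Import Defs.
From HB Require Import structures.
From mathcomp Require Import all_boot all_order all_algebra.
From mathcomp Require Import ring lra zify.
Import Order.TTheory GRing.Theory Num.Theory.

Module Aux.
Set Implicit Arguments. Unset Strict Implicit. Unset Printing Implicit Defensive.
Module MA.

Definition prc (m : nat) (B C : {set 'I_m}) : bool :=
  [exists x in B, [forall y in C, (x <= y)%N]].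

Section Lab.
Variables (m : nat) (P : {set {set 'I_m}}) (HP : setpart P).

Let tiP : trivIset P := partition_trivIset HP.
Let covP : cover P = setT.
Proof. by case/and3P: HP => /eqP. Qed.

Local Notation bl x := (pblock P x).
Local Notation lab := (cluster_label P).

Lemma bl_in x : bl x \in P.
Proof. by apply: pblock_mem; rewrite covP inE. Qed.

Lemma bl_self x : x \in bl x.
Proof. by rewrite mem_pblock covP inE. Qed.

Lemma bl_eq x y : (bl x == bl y) = (y \in bl x).
Proof. by rewrite eq_pblock // covP inE. Qed.

Lemma bl_same x y : y \in bl x -> bl y = bl x.
Proof. by move=> h; apply: same_pblock. Qed.

Lemma exmin x : exists2 b, b \in bl x & forall y, y \in bl x -> (b <= y)%N.
Proof.
case: (arg_minnP (fun i : 'I_m => nat_of_ord i) (bl_self x)) => b Hb Hmin.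
by exists b.
Qed.

Lemma prc_refl x : prc (bl x) (bl x).
Proof.
case: (exmin x) => b Hb Hm; apply/existsP; exists b; rewrite Hb /=.
by apply/forallP => y; apply/implyP => /Hm.
Qed.

Lemma prcP (B C : {set 'I_m}) :
  reflect (exists2 b, b \in B & forall y, y \in C -> (b <= y)%N) (prc B C).
Proof.
apply: (iffP existsP) => [[b /andP[Hb /forallP H]]|[b Hb H]].
  by exists b => // y Hy; move: (H y); rewrite Hy.
by exists b; rewrite Hb /=; apply/forallP => y; apply/implyP => /H.
Qed.

Lemma prc_total x y : prc (bl x) (bl y) || prc (bl y) (bl x).
Proof.
case: (exmin x) => a Ha Hma; case: (exmin y) => c Hc Hmc.
case: (leqP a c) => h.
  by apply/orP; left; apply/prcP; exists a => // z /Hmc; apply: leq_trans.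
apply/orP; right; apply/prcP; exists c => // z /Hma; apply: leq_trans.
exact: ltnW.
Qed.

Lemma prc_trans (A B C : {set 'I_m}) : prc A B -> prc B C -> prc A C.
Proof.
move=> /prcP [a Ha HA] /prcP [b Hb HB]; apply/prcP; exists a => // z /HB.
by apply: leq_trans; apply: HA.
Qed.

Lemma prc_antisym x y : prc (bl x) (bl y) -> prc (bl y) (bl x) -> bl x = bl y.
Proof.
move=> /prcP [a Ha HA] /prcP [c Hc HC].
have ac : a = c by apply/val_inj/eqP; rewrite eqn_leq HA // HC.
subst c. by rewrite -(bl_same Ha) (bl_same Hc).
Qed.

Definition Sx x := [set B in P | prc B (bl x)].

Lemma labE x : lab x = #|Sx x|.
Proof. by []. Qed.

Lemma Sx_sub x y : prc (bl x) (bl y) -> Sx x \subset Sx y.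
Proof.
move=> h; apply/subsetP => B; rewrite !inE => /andP[-> hB] /=.
exact: prc_trans hB h.
Qed.

Lemma lab_lt x y : prc (bl x) (bl y) -> bl x != bl y -> (lab x < lab y)%N.
Proof.
move=> h hne; rewrite !labE; apply: proper_card; rewrite properE Sx_sub //=.
apply/subsetPn; exists (bl y); first by rewrite inE bl_in prc_refl.
rewrite inE bl_in /=; apply/negP => h'.
by move: hne; rewrite (prc_antisym h h') eqxx.
Qed.

Lemma lab_bl x y : bl x = bl y -> lab x = lab y.
Proof. by rewrite /cluster_label => ->. Qed.

Lemma lab_eq x y : (lab x == lab y) = (y \in bl x).
Proof.
case Hy: (y \in bl x).
  by rewrite (lab_bl (bl_same Hy)) eqxx.
have hne : bl x != bl y by rewrite bl_eq Hy.
case/orP: (prc_total x y) => h.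
  by rewrite ltn_eqF // lab_lt.
by rewrite gtn_eqF // lab_lt // eq_sym.
Qed.

Lemma lab_ltP x y : (lab x < lab y)%N -> prc (bl x) (bl y).
Proof.
move=> hl; case/orP: (prc_total x y) => // h.
case: (eqVneq (bl y) (bl x)) => e.
  by move: hl; rewrite (lab_bl e) ltnn.
by move: (lab_lt h e); rewrite ltnNge (ltnW hl).
Qed.

Lemma lab_ge1 x : (0 < lab x)%N.
Proof. by rewrite labE card_gt0; apply/set0Pn; exists (bl x); rewrite inE bl_in prc_refl. Qed.

Lemma blockP B : B \in P -> exists x, B = bl x.
Proof.
move=> PB; have /set0Pn [x Bx] : B != set0 by apply: partition_neq0 HP PB.
by exists x; rewrite (def_pblock tiP PB Bx).
Qed.

Lemma lab_surj x l : (0 < l <= lab x)%N -> exists2 x' : 'I_m, (x' <= x)%N & lab x' = l.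
Proof.
move=> /andP[l1 lx].
pose rep (B : {set 'I_m}) := odflt x [pick b in B].
have repP B : B \in P -> rep B \in B.
  move=> /blockP [y ->]; rewrite /rep; case: pickP => //= /(_ y).
  by rewrite bl_self.
pose s := [seq lab (rep B) | B <- enum (Sx x)].
have us : uniq s.
  rewrite map_inj_in_uniq ?enum_uniq // => B C; rewrite !mem_enum !inE.
  move=> /andP[PB _] /andP[PC _] /eqP; rewrite lab_eq => h.
  have e1 := def_pblock tiP PB (repP _ PB).
  have e2 := def_pblock tiP PC (repP _ PC).
  by rewrite -e1 -e2 (bl_same h).
have ss : {subset s <= iota 1 (lab x)}.
  move=> v /mapP [B]; rewrite mem_enum inE => /andP[PB hB] ->.
  rewrite mem_iota lab_ge1 /= add1n ltnS labE.
  apply: subset_leq_card; apply: Sx_sub.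
  by rewrite (def_pblock tiP PB (repP _ PB)).
have sz : size (iota 1 (lab x)) <= size s.
  by rewrite size_iota size_map -cardE labE.
have [_ eqs] := uniq_min_size us ss sz.
have : l \in s by rewrite eqs mem_iota l1 add1n ltnS.
move=> /mapP [B]; rewrite mem_enum inE => /andP[PB /prcP [b Hb Hm]] ->.
exists b; first by apply: Hm; apply: bl_self.
apply/eqP; rewrite lab_eq.
by rewrite (def_pblock tiP PB Hb) repP.
Qed.

End Lab.

Lemma setpart_blocks m (P : {set {set 'I_m}}) : setpart P -> P = [set pblock P x | x : 'I_m].
Proof.
move=> HP; apply/setP => B; apply/idP/imsetP => [PB|[x _ ->]].
  by case: (blockP HP PB) => x ->; exists x.
exact: bl_in.
Qed.

Lemma lab_uniq m (P Q : {set {set 'I_m}}) : setpart P -> setpart Q ->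
  cluster_label P =1 cluster_label Q -> P = Q.
Proof.
move=> HP HQ e; rewrite (setpart_blocks HP) (setpart_blocks HQ).
apply: eq_imset => x; apply/setP => y.
by rewrite -(lab_eq HP) -(lab_eq HQ) !e.
Qed.

Lemma master m (P : {set {set 'I_m}}) (z : 'I_m -> nat) : setpart P ->
  (forall x y, (z x == z y) = (y \in pblock P x)) ->
  (forall x y, (z x < z y)%N -> exists x', z x' = z x /\ forall y', z y' = z y -> (x' <= y')%N) ->
  (forall x, (0 < z x)%N) ->
  (forall x l, (0 < l <= z x)%N -> exists x', z x' = l) ->
  forall y, cluster_label P y = z y.
Proof.
move=> HP ha hb hc hd y.
have tiP : trivIset P := partition_trivIset HP.
have key : forall x, prc (pblock P x) (pblock P y) = (z x <= z y)%N.
  move=> x; apply/idP/idP.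
    move=> /prcP [b Hb Hm]; rewrite leqNgt; apply/negP => lt.
    have [y'' [e1 e2]] := hb _ _ lt.
    have zb : z b = z x by apply/eqP; rewrite eq_sym ha.
    have h1 : (y'' <= b)%N by apply: e2.
    have h2 : (b <= y'')%N by apply: Hm; rewrite -ha e1.
    have : b = y'' by apply/val_inj/eqP; rewrite eqn_leq h1 h2.
    by move=> E; move: lt; rewrite -zb E e1 ltnn.
  rewrite leq_eqVlt => /orP [/eqP e|lt].
    have : y \in pblock P x by rewrite -ha e.
    by move=> /(bl_same HP) ->; apply: prc_refl.
  have [x' [e1 e2]] := hb _ _ lt.
  apply/prcP; exists x'; first by rewrite -ha e1.
  by move=> y' hy'; apply: e2; apply/eqP; rewrite eq_sym ha.
pose rep (B : {set 'I_m}) := odflt y [pick b in B].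
have repP B : B \in P -> rep B \in B.
  move=> /(blockP HP) [x ->]; rewrite /rep; case: pickP => //= /(_ x).
  by rewrite bl_self.
have repE B : B \in P -> pblock P (rep B) = B.
  by move=> PB; apply: def_pblock => //; apply: repP.
pose s := [seq z (rep B) | B <- enum (Sx P y)].
have us : uniq s.
  rewrite map_inj_in_uniq ?enum_uniq // => B C; rewrite !mem_enum !inE.
  move=> /andP[PB _] /andP[PC _] /eqP; rewrite ha => h.
  by rewrite -(repE _ PB) -(repE _ PC) (bl_same HP h).
have eqs : s =i iota 1 (z y).
  move=> v; apply/mapP/idP.
    move=> [B]; rewrite mem_enum inE => /andP[PB hB] ->.
    rewrite mem_iota hc /= add1n ltnS -key repE //.
  rewrite mem_iota add1n ltnS => /andP[v1 vy].
  have [x' ex'] : exists x', z x' = v by apply: (hd y v); rewrite v1 vy.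
  exists (pblock P x'); last first.
    rewrite -ex'; apply/eqP; rewrite eq_sym ha.
    by rewrite repE ?bl_in // bl_self.
  by rewrite mem_enum inE bl_in // key ex'.
rewrite labE.
have := uniq_size_uniq us eqs; rewrite iota_uniq size_iota size_map -cardE.
by move=> /esym /eqP.
Qed.

End MA.
Export MA.
Module MB.

Lemma max_mem (w : seq nat) : w != [::] -> \max_(x <- w) x \in w.
Proof.
elim: w => // a r IH _; rewrite big_cons inE.
case: r IH => [|b r] IH; first by rewrite big_nil maxn0 eqxx.
have := IH isT; case: (leqP a (\max_(x <- b :: r) x)) => h hm.
  by rewrite hm orbT.
by rewrite eqxx.
Qed.

Lemma le_max (w : seq nat) x : x \in w -> (x <= \max_(y <- w) y)%N.
Proof. by move=> h; apply: (@leq_bigmax_seq _ w xpredT id x h). Qed.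

Lemma sum_nth_count0 (w : seq nat) v :
  (\sum_(i < size w) (nth 0 w i == v))%N = count_mem v w.
Proof.
elim: w => [|a r IH]; first by rewrite big_ord0.
by rewrite /= big_ord_recl /= IH.
Qed.

Lemma sum_nth_count (w : seq nat) m v : size w = m ->
  (\sum_(i < m) (nth 0 w i == v))%N = count_mem v w.
Proof. by move=> <-; apply: sum_nth_count0. Qed.

Section Cond.
Variables (n : nat) (w : seq nat) (P0 : {set {set 'I_n.+1}}).
Hypotheses (n1 : (0 < n)%N) (sw : size w = n) (HP0 : setpart P0)
  (pre0 : prefix_event n w P0).

Local Notation k := (\max_(x <- w) x).
Local Notation L0 := (cluster_label P0).

Lemma hw (i : 'I_n.+1) : (i < n)%N -> L0 i = nth 0 w i.
Proof. by move=> h; move/forallP: pre0 => /(_ i); rewrite h => /eqP. Qed.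

Lemma K1 (i : 'I_n.+1) : (i < n)%N -> (nth 0 w i <= k)%N.
Proof. by move=> h; apply: le_max; apply: mem_nth; rewrite sw. Qed.

Lemma K2 : exists2 i0 : 'I_n.+1, (i0 < n)%N & L0 i0 = k.
Proof.
have wn : w != [::] by rewrite -size_eq0 sw -lt0n.
have hm := max_mem wn.
have hi : (index k w < n)%N by rewrite -sw index_mem.
have hi' : (index k w < n.+1)%N by apply: ltnW.
exists (Ordinal hi') => //.
by rewrite hw //= nth_index.
Qed.

Lemma k_ge1 : (0 < k)%N.
Proof. by case: K2 => i0 _ <-; apply: lab_ge1. Qed.

Lemma Lsurj l : (0 < l <= k)%N -> exists2 x : 'I_n.+1, (x < n)%N & L0 x = l.
Proof.
move=> hl; case: K2 => i0 hi0 e.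
case: (@lab_surj _ _ HP0 i0 l _) => [|x' hx' e']; first by rewrite e.
by exists x' => //; apply: leq_ltn_trans hx' hi0.
Qed.

Lemma in_w l : (0 < l <= k)%N -> l \in w.
Proof.
move=> /Lsurj [x hx <-]; rewrite hw //; apply: mem_nth; by rewrite sw.
Qed.

Lemma k_le_n : (k <= n)%N.
Proof.
have := @uniq_leq_size _ (iota 1 k) w (iota_uniq _ _).
rewrite size_iota sw; apply => l; rewrite mem_iota add1n ltnS => h.
exact: in_w.
Qed.

Lemma w_le_k (i : 'I_n.+1) : (i < n)%N -> (L0 i <= k)%N.
Proof. by move=> h; rewrite hw // K1. Qed.

Definition zj (j : nat) (i : 'I_n.+1) : nat := if (i < n)%N then nth 0 w i else j.
Definition Qj (j : nat) := preim_partition (zj j) [set: 'I_n.+1].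

Lemma not_lt_max (i : 'I_n.+1) : ~~ (i < n)%N -> i = ord_max.
Proof. by move=> h; apply/val_inj => /=; apply/eqP; rewrite eqn_leq -ltnS ltn_ord leqNgt h. Qed.

Section J.
Variable j : nat.
Hypothesis hj : (0 < j <= k.+1)%N.
Local Notation z := (zj j).

Lemma Qpart : setpart (Qj j).
Proof. by apply: preim_partitionP. Qed.

Lemma za x y : (z x == z y) = (y \in pblock (Qj j) x).
Proof.
rewrite /Qj /preim_partition pblock_equivalence_partition ?inE //.
by move=> ? ? ? _ _ _; split=> // /eqP->.
Qed.

Lemma zL (x : 'I_n.+1) : (x < n)%N -> z x = L0 x.
Proof. by move=> h; rewrite /zj h hw. Qed.

Lemma zb x y : (z x < z y)%N -> exists x', z x' = z x /\ forall y', z y' = z y -> (x' <= y')%N.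
Proof.
move=> lt.
have [x0 hx0 ex0] : exists2 x0 : 'I_n.+1, (x0 < n)%N & L0 x0 = z x.
  case hx: (x < n)%N; first by exists x => //; rewrite zL.
  case hy: (y < n)%N.
    case: (@lab_surj _ _ HP0 y (z x) _) => [|x' hx' e'].
      by rewrite -zL // (ltnW lt) andbT /zj hx; case/andP: hj.
    by exists x' => //; apply: leq_ltn_trans hx' hy.
  by move: lt; rewrite /zj hx hy ltnn.
have [b hb hm] := exmin HP0 x0.
have bx0 : (b <= x0)%N by apply: hm; apply: bl_self.
have bn : (b < n)%N by apply: leq_ltn_trans bx0 hx0.
exists b; split.
  rewrite zL // -ex0; apply/eqP; by rewrite eq_sym lab_eq.
move=> y' ey'.
case hy': (y' < n)%N; last by apply: ltnW; apply: leq_trans bn _; rewrite leqNgt hy'.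
have : (L0 x0 < L0 y')%N by rewrite ex0 -zL // ey'.
move=> /(lab_ltP HP0) /prcP [b'' hb'' hm''].
apply: leq_trans (hm _ hb'') _; apply: hm''; exact: (bl_self HP0).
Qed.

Lemma zc x : (0 < z x)%N.
Proof.
case hx: (x < n)%N; first by rewrite zL // lab_ge1.
by rewrite /zj hx; case/andP: hj.
Qed.

Lemma zd x l : (0 < l <= z x)%N -> exists x', z x' = l.
Proof.
move=> /andP [l0 lx].
case hx: (x < n)%N.
  case: (@lab_surj _ _ HP0 x l _) => [|x' hx' e'].
    by rewrite l0 -zL.
  by exists x'; rewrite zL //; apply: leq_ltn_trans hx' hx.
move: lx; rewrite /zj hx => lj.
case: (eqVneq l j) => e.
  by exists ord_max; rewrite /zj /= ltnn e.
have lk : (l <= k)%N by case/andP: hj => _ h; rewrite -ltnS; apply: leq_trans h; rewrite ltn_neqAle e lj.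
case: (@Lsurj l _) => [|x' hx' e']; first by rewrite l0 lk.
by exists x'; rewrite hx' -hw.
Qed.

Lemma Qlab i : cluster_label (Qj j) i = z i.
Proof. apply: master => //; [exact: Qpart| exact: za| exact: zb| exact: zc| exact: zd]. Qed.

Lemma evQ P : (setpart P && (prefix_event n w P && (cluster_label P ord_max == j))) = (P == Qj j).
Proof.
apply/idP/eqP.
  move=> /andP [HP /andP [pre /eqP ej]].
  apply: lab_uniq => //; first exact: Qpart.
  move=> i; rewrite Qlab; case hi: (i < n)%N.
    by move/forallP: pre => /(_ i); rewrite hi /= => /eqP ->; rewrite /zj hi.
  by rewrite (not_lt_max (negbT hi)) ej /zj /= ltnn.
move=> ->; rewrite Qpart /=; apply/andP; split.
  by apply/forallP => i; apply/implyP => hi; rewrite Qlab /zj hi.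
by rewrite Qlab /zj /= ltnn.
Qed.

End J.

Lemma ev0 j P : ~~ (0 < j <= k.+1)%N ->
  (setpart P && (prefix_event n w P && (cluster_label P ord_max == j))) = false.
Proof.
move=> hj; apply/negP => /andP [HP /andP [pre /eqP ej]].
have hl := lab_ge1 HP ord_max.
move: hj; rewrite -ej hl /= -ltnNge => hk.
case: (@lab_surj _ _ HP ord_max k.+1 (ltnW hk)) => x' hx' e'.
case hx: (x' < n)%N.
  move/forallP: pre => /(_ x'); rewrite hx /= e' => /eqP e.
  by have := K1 hx; rewrite -e ltnn.
by move: hk; rewrite -(not_lt_max (negbT hx)) e' ltnn.
Qed.


Definition Kj j := if (j <= k)%N then k else k.+1.

Section J2.
Variable j : nat.
Hypothesis hj : (0 < j <= k.+1)%N.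
Local Notation z := (zj j).
Local Notation K := (Kj j).

Lemma card_fiber v : #|[set y : 'I_n.+1 | z y == v]| = (count_mem v w + (j == v))%N.
Proof.
rewrite -sum1dep_card big_mkcond /= big_ord_recr /= /zj ltnn.
rewrite -(sum_nth_count v sw); congr (_ + _)%N.
by apply: eq_bigr => i _; rewrite /= ltn_ord; case: (_ == v).
Qed.

Lemma zrange x : (z x <= K)%N.
Proof.
rewrite /Kj; case hx: (x < n)%N.
  by rewrite zL // (leq_trans (w_le_k hx)) //; case: (j <= k)%N.
rewrite /zj hx; case: ifP => // /negbT; rewrite -ltnNge => h.
by case/andP: hj.
Qed.

Lemma zsurjK l : (0 < l <= K)%N -> exists x, z x = l.
Proof.
move=> hl.
have [x ex] : exists x, z x = K.
  rewrite /Kj; case: ifP => hjk.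
    by case: K2 => i0 hi0 e; exists i0; rewrite zL.
  exists ord_max; rewrite /zj /= ltnn; apply/eqP; rewrite eqn_leq.
  by case/andP: hj => _ ->; rewrite ltnNge hjk.
by apply: (zd hj (x := x)); rewrite ex.
Qed.

Definition Fb (l : 'I_K) := [set y : 'I_n.+1 | z y == (val l).+1].

Lemma Fb_inj : injective Fb.
Proof.
move=> l1 l2 e.
have [x ex] : exists x, z x = (val l1).+1 by apply: zsurjK; rewrite ltn_ord.
have : x \in Fb l1 by rewrite inE ex.
by rewrite e inE ex eqSS => /eqP /val_inj.
Qed.

Lemma Qj_eq : Qj j = [set Fb l | l : 'I_K].
Proof.
apply/setP => B; apply/imsetP/imsetP => [[x _ ->]|[l _ ->]].
  have hz : ((z x).-1 < K)%N by rewrite prednK ?zc ?zrange.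
  exists (Ordinal hz) => //; apply/setP => y; rewrite !inE /= prednK ?zc //.
have [x ex] : exists x, z x = (val l).+1 by apply: zsurjK; rewrite ltn_ord.
exists x => //; apply/setP => y; by rewrite !inE ex eq_sym.
Qed.

End J2.

Section Prob.
Local Open Scope ring_scope.
Variables (R : realFieldType) (V : nat -> nat -> R) (W : nat -> R).
Hypotheses (V_gt0 : forall n k, (1 <= k)%N -> (k <= n)%N -> 0 < V n k)
  (W_gt0 : forall s, (1 <= s)%N -> 0 < W s) (W1 : W 1%N = 1).

Lemma gibbsQ j : (0 < j <= k.+1)%N ->
  gibbs_prob V W (Qj j) = V n.+1 (Kj j) * \prod_(l < Kj j) W (count_mem l.+1 w + (j == l.+1))%N.
Proof.
move=> hj; rewrite /gibbs_prob (Qj_eq hj) card_imset; last exact: (@Fb_inj j hj).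
rewrite card_ord big_imset /=; last by move=> l1 l2 _ _; apply: (@Fb_inj j hj).
by congr (_ * _); apply: eq_bigr => l _; rewrite card_fiber.
Qed.

Definition c0 := V n.+1 k * \prod_(l < k) W (count_mem l.+1 w).

Lemma cnt_pos l : (0 < l <= k)%N -> (0 < count_mem l w)%N.
Proof. by move=> h; rewrite -has_count has_pred1 in_w. Qed.

Lemma Vk_gt0 : 0 < V n.+1 k.
Proof. by apply: V_gt0; [exact: k_ge1 | apply: leqW; exact: k_le_n]. Qed.

Lemma c0_gt0 : 0 < c0.
Proof.
rewrite /c0 mulr_gt0 ?Vk_gt0 //; apply: prodr_gt0 => l _.
by apply: W_gt0; apply: cnt_pos; rewrite ltn_ord.
Qed.

Lemma PrJ j : gibbs_Pr V W (fun P => prefix_event n w P && (cluster_label P ord_max == j)) =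
  c0 * (if (1 <= j <= k)%N then f_ratio W (count_mem j w)
        else if j == k.+1 then g_ratio V n k else 0).
Proof.
rewrite /gibbs_Pr.
case hj: (0 < j <= k.+1)%N; last first.
  rewrite [LHS]big_pred0; last by move=> P /=; rewrite ev0 // hj.
  have h1 : (1 <= j <= k)%N = false.
    by apply/negbTE; apply: contraFN hj => /andP[a b]; by rewrite a (leqW b).
  have h2 : (j == k.+1) = false.
    by apply/negbTE; apply: contraFN hj => /eqP ->; rewrite leqnn andbT.
  by rewrite h1 h2 mulr0.
rewrite (big_pred1 (Qj j)); last by move=> P; apply: evQ.
rewrite gibbsQ //.
case hjk: (j <= k)%N.
  have j1 : (1 <= j)%N by case/andP: hj.
  rewrite /Kj hjk j1 /= /c0 -mulrA; congr (_ * _).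
  have e : forall l : 'I_k, W (count_mem l.+1 w + (j == l.+1))%N =
      W (count_mem l.+1 w) * (if j == l.+1 then f_ratio W (count_mem j w) else 1).
    move=> l; case: eqP => [->|_]; last by rewrite addn0 mulr1.
    rewrite addn1 /f_ratio mulrC divfK //; apply: lt0r_neq0; apply: W_gt0.
    by apply: cnt_pos; rewrite ltn_ord.
  rewrite (eq_bigr _ (fun l _ => e l)) big_split /=; congr (_ * _).
  rewrite -big_mkcond /=.
  case: j hj hjk j1 e => // j' hj hjk _ _.
  rewrite (big_pred1 (Ordinal hjk)) // => l /=.
have ej : j = k.+1.
  by apply/eqP; rewrite eqn_leq; case/andP: hj => _ ->; rewrite ltnNge hjk.
rewrite ej /Kj ltnn andbF eqxx big_ord_recr /=.
have c0' : count_mem k.+1 w = 0%N.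
  by apply/count_memPn; apply/negP => /le_max; rewrite ltnn.
rewrite c0' eqxx add0n W1 mulr1.
have e : forall l : 'I_k, W (count_mem (widen_ord (leqnSn k) l).+1 w + (k.+1 == (widen_ord (leqnSn k) l).+1))%N =
    W (count_mem l.+1 w).
  by move=> l /=; rewrite eqSS gtn_eqF ?addn0.
rewrite (eq_bigr _ (fun l _ => e l)) /c0 /g_ratio.
have := Vk_gt0; move: (V n.+1 k) => v hv.
by field; apply: lt0r_neq0.
Qed.

End Prob.

End Cond.

Local Open Scope ring_scope.
Lemma part1 (R : realFieldType) (V : nat -> nat -> R) (W : nat -> R)
  (V_gt0 : forall n k, (1 <= k)%N -> (k <= n)%N -> 0 < V n k)
  (W_gt0 : forall s, (1 <= s)%N -> 0 < W s) (W1 : W 1%N = 1) :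
  forall (n : nat) (w : seq nat), (1 <= n)%N -> size w = n ->
     0 < gibbs_Pr V W (prefix_event n w) ->
     let k := \max_(x <- w) x in
     exists c : R, 0 < c /\
       forall j : nat,
         cond_prob V W n w j =
         c * (if (1 <= j <= k)%N then f_ratio W (count_mem j w)
              else if j == k.+1 then g_ratio V n k else 0).
Proof.
move=> n w n1 sw hpos k.
case: (pickP (fun P : {set {set 'I_n.+1}} => setpart P && prefix_event n w P)) => [P0 /andP [HP0 pre0]|none].
  exists (c0 n w V W / gibbs_Pr V W (prefix_event n w)); split.
    by rewrite divr_gt0 // (c0_gt0 n1 sw HP0 pre0 V_gt0 W_gt0).
  move=> j; rewrite /cond_prob (PrJ n1 sw HP0 pre0 V_gt0 W_gt0 W1 j).
  by rewrite mulrAC.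
move: hpos; rewrite /gibbs_Pr [X in 0 < X]big_pred0 ?ltxx // => P.
Qed.

End MB.
Export MB.
Module MC.

Lemma pw_sub (x T : nat) : x - T = ((T < x) + (x - T.+1))%N.
Proof. by case: ltnP => h /=; lia. Qed.

Lemma Asplit (s : seq nat) T :
  (\sum_(x <- s) (x - T) = \sum_(x <- s) (T < x) + \sum_(x <- s) (x - T.+1))%N.
Proof. by rewrite -big_split /=; apply: eq_bigr => x _; apply: pw_sub. Qed.

Lemma elem_le_sumn (s : seq nat) x : x \in s -> (x <= sumn s)%N.
Proof.
elim: s => // a r IH; rewrite inE /= => /orP [/eqP ->|h]; first exact: leq_addr.
by apply: leq_trans (IH h) _; apply: leq_addl.
Qed.

Lemma sum_sub1 (s : seq nat) : all (fun x => 0 < x)%N s ->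
  (\sum_(x <- s) (x - 1) + size s = sumn s)%N.
Proof.
elim: s => [|a r IH]; first by rewrite big_nil.
by rewrite /= big_cons => /andP [a0 /IH <-]; lia.
Qed.

Lemma sum_take_ge (r : seq nat) T : (sumn r <= \sum_(x <- r) (x - T) + size r * T)%N.
Proof. elim: r => [|a r IH]; first by rewrite big_nil. rewrite /= big_cons; lia. Qed.

Lemma sum_take_eq (r : seq nat) T : all (fun x => T < x)%N r ->
  (\sum_(x <- r) (x - T) + size r * T = sumn r)%N.
Proof.
elim: r => [|a r IH]; first by rewrite big_nil.
by rewrite /= big_cons => /andP [a0 /IH <-]; lia.
Qed.

Lemma split_sorted (s : seq nat) T : sorted geq s ->
  exists J, [/\ (J <= size s)%N, all (fun x => T < x)%N (take J s) &
                 all (fun x => x <= T)%N (drop J s)].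
Proof.
elim: s => [|x r IH]; first by move=> _; exists 0%N.
move=> /= hp.
have tr : transitive geq by move=> a b c h1 h2; exact: leq_trans h2 h1.
have hr : sorted geq r := path_sorted hp.
have hall := order_path_min tr hp.
case: (leqP x T) => hx.
  exists 0%N; split => //=; rewrite hx /=.
  by apply/allP => y /(allP hall) /= hy; apply: leq_trans hy hx.
have [J [h1 h2 h3]] := IH hr.
by exists J.+1; split => //=; rewrite hx.
Qed.

Lemma maj (s s' : seq nat) T : sorted geq s' -> size s = size s' ->
  (forall J, (1 <= J <= size s)%N -> (sumn (take J s') <= sumn (take J s))%N) ->
  (\sum_(x <- s') (x - T) <= \sum_(x <- s) (x - T))%N.
Proof.
move=> ss sz hJ.
have [J [h1 h2 h3]] := split_sorted T ss.
have e1 : (\sum_(x <- s') (x - T) = \sum_(x <- take J s') (x - T))%N.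
  rewrite -{1}(cat_take_drop J s') big_cat /= [X in (_ + X)%N]big1_seq ?addn0 // => x /andP [_ h].
  by apply/eqP; rewrite subn_eq0; apply: (allP h3).
have e2 := sum_take_eq h2; rewrite size_takel // in e2.
have e3 := sum_take_ge (take J s) T; rewrite size_takel ?sz // in e3.
have e4 : (\sum_(x <- take J s) (x - T) <= \sum_(x <- s) (x - T))%N.
  by rewrite -{2}(cat_take_drop J s) big_cat leq_addr.
have e5 : (sumn (take J s') <= sumn (take J s))%N.
  case: J h1 h2 h3 e1 e2 e3 e4 => [|J] h1 *; first by rewrite !take0.
  by apply: hJ; rewrite sz.
lia.
Qed.

Local Open Scope ring_scope.

Section Key.
Variables (R : realFieldType).

Lemma absum (f : nat -> R) (a b A B : nat -> nat) (N : nat) :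
  (forall t, (1 <= t)%N -> 0 < f t) -> (forall t, (1 <= t)%N -> f t <= f t.+1) ->
  (forall T, A T = a T + A T.+1)%N -> (forall T, B T = b T + B T.+1)%N ->
  A N = 0%N -> B N = 0%N -> (forall T, B T <= A T)%N ->
  forall L, (1 <= L)%N -> (L <= N)%N ->
  f L ^+ (A L - B L) * \prod_(L <= t < N) f t ^+ b t <= \prod_(L <= t < N) f t ^+ a t.
Proof.
move=> fpos fmon eA eB AN BN BA L L1 LN.
have : (L + (N - L) = N)%N by rewrite subnKC.
move: (N - L)%N => d; elim: d L L1 {LN} => [|d IH] L L1 hd.
  rewrite addn0 in hd; subst L.
  by rewrite AN BN subnn expr0 mul1r !big_geq.
have LN : (L < N)%N by rewrite -hd; lia.
rewrite [X in _ <= X]big_ltn // [X in _ * X <= _]big_ltn //.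
have hd' : (L.+1 + d = N)%N by rewrite addSnnS.
have IH' := IH L.+1 (leqW L1) hd'.
set Pa := \prod_(L.+1 <= t < N) f t ^+ a t in IH' *.
set Pb := \prod_(L.+1 <= t < N) f t ^+ b t in IH' *.
have Pb0 : 0 <= Pb.
  rewrite /Pb big_nat_cond; apply: prodr_ge0 => t /andP [/andP [ht _] _].
  by apply: exprn_ge0; apply: ltW; apply: fpos; apply: leq_trans L1 (ltnW ht).
have ex : (A L - B L + b L = a L + (A L.+1 - B L.+1))%N.
  have := eA L; have := eB L; have := BA L; have := BA L.+1; lia.
rewrite mulrA -exprD ex exprD -mulrA.
apply: ler_wpM2l; first by apply: exprn_ge0; apply: ltW; apply: fpos.
apply: le_trans IH'; apply: ler_wpM2r => //.
apply: lerXn2r; last exact: fmon.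
  by rewrite nnegrE; apply: ltW; apply: fpos.
by rewrite nnegrE; apply: ltW; apply: fpos; apply: leqW.
Qed.


Lemma Wtel (W : nat -> R) (W1 : W 1%N = 1) (Wpos : forall s, (1 <= s)%N -> 0 < W s) x :
  (1 <= x)%N -> W x = \prod_(1 <= t < x) (W t.+1 / W t).
Proof.
elim: x => // x IH hx.
case: x IH hx => [|x] IH hx; first by rewrite big_geq.
rewrite big_nat_recr //= -IH // mulrC divfK //.
by apply: lt0r_neq0; apply: Wpos.
Qed.

Lemma WprodN (W : nat -> R) (W1 : W 1%N = 1) (Wpos : forall s, (1 <= s)%N -> 0 < W s) N x :
  (1 <= x)%N -> (x <= N)%N -> W x = \prod_(1 <= t < N) (W t.+1 / W t) ^+ (t < x).
Proof.
move=> x1 xN; rewrite (Wtel W1 Wpos x1) [RHS](@big_cat_nat _ _ _ x) //=.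
rewrite [X in _ = _ * X]big_nat_cond [X in _ = _ * X]big1 ?mulr1.
  by apply: eq_big_nat => t /andP [_ h]; rewrite h expr1.
by move=> t /andP [/andP [h _] _]; rewrite ltnNge h /= expr0.
Qed.

Lemma prodW (W : nat -> R) (W1 : W 1%N = 1) (Wpos : forall s, (1 <= s)%N -> 0 < W s) N (s : seq nat) :
  all (fun x => 0 < x)%N s -> all (fun x => x <= N)%N s ->
  \prod_(x <- s) W x = \prod_(1 <= t < N) (W t.+1 / W t) ^+ (\sum_(x <- s) (t < x)).
Proof.
move=> hp hN.
rewrite (eq_big_seq (fun x => \prod_(1 <= t < N) (W t.+1 / W t) ^+ (t < x))); last first.
  by move=> x hx; apply: WprodN => //; [apply: (allP hp) | apply: (allP hN)].
by rewrite exchange_big /=; apply: eq_bigr => t _; rewrite prodrXr.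
Qed.

Lemma key (W : nat -> R) (W1 : W 1%N = 1) (Wpos : forall s, (1 <= s)%N -> 0 < W s)
  (Hf : forall m, (1 <= m)%N -> W m.+1 / W m <= W m.+2 / W m.+1) n k s s' :
  (1 <= n)%N -> int_part n k s -> int_part n k s' -> prec_part s s' ->
  \prod_(x <- s') W x <= \prod_(x <- s) W x.
Proof.
move=> n1 /and4P [/eqP sz pos srt /eqP sm] /and4P [/eqP sz' pos' srt' /eqP sm'] /andP [_ hJ].
have le (s0 : seq nat) : sumn s0 = n -> all (fun x => x <= n)%N s0.
  by move=> sm0; apply/allP => x hx; rewrite -sm0; apply: elem_le_sumn.
rewrite (prodW W1 Wpos pos' (le _ sm')) (prodW W1 Wpos pos (le _ sm)).
have A1 : (\sum_(x <- s) (x - 1) = \sum_(x <- s') (x - 1))%N.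
  have := sum_sub1 pos; have := sum_sub1 pos'; rewrite sm sm' sz sz'; lia.
have H1 : forall t, (1 <= t)%N -> 0 < W t.+1 / W t.
  by move=> t t1; apply: divr_gt0; apply: Wpos => //; apply: leqW.
have H3 : forall (r : seq nat), sumn r = n -> (\sum_(x <- r) (x - n) = 0)%N.
  by move=> r hr; rewrite big1_seq // => x /andP [_ hx]; apply/eqP; rewrite subn_eq0; apply: (allP (le _ hr)).
have H4 : forall T, (\sum_(x <- s') (x - T) <= \sum_(x <- s) (x - T))%N.
  move=> T; apply: maj => //; first by rewrite sz sz'.
  by move=> J hJ1; apply: (allP hJ); rewrite mem_iota add1n ltnS.
have := @absum (fun t => W t.+1 / W t) (fun t => \sum_(x <- s) (t < x))%N
  (fun t => \sum_(x <- s') (t < x))%N (fun T => \sum_(x <- s) (x - T))%N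
  (fun T => \sum_(x <- s') (x - T))%N n H1 Hf (fun T => Asplit s T) (fun T => Asplit s' T)
  (H3 _ sm) (H3 _ sm') H4 1%N (leqnn 1) n1.
by rewrite /= A1 subnn expr0 mul1r.
Qed.

Lemma divle1 (a b c : R) : 0 < a -> 0 < b -> 0 < c -> (a / b <= b / c) = (a * c <= b * b).
Proof.
move=> ha hb hc; rewrite -(ler_pM2r (mulr_gt0 hb hc)).
have e1 : a / b * (b * c) = a * c by field; apply: lt0r_neq0.
have e2 : b / c * (b * c) = b * b by field; apply: lt0r_neq0.
by rewrite e1 e2.
Qed.

Lemma divle2 (a b c : R) : 0 < a -> 0 < b -> 0 < c -> (b / a <= c / b) = (b * b <= c * a).
Proof.
move=> ha hb hc; rewrite -(ler_pM2r (mulr_gt0 ha hb)).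
have e1 : b / a * (a * b) = b * b by field; apply: lt0r_neq0.
have e2 : c / b * (a * b) = c * a by field; apply: lt0r_neq0.
by rewrite e1 e2.
Qed.

End Key.

Lemma ex_parts m : (1 <= m)%N -> [&& int_part (m.+1 + m.+1) 2 [:: m.+2; m],
  int_part (m.+1 + m.+1) 2 [:: m.+1; m.+1] & prec_part [:: m.+2; m] [:: m.+1; m.+1]].
Proof.
move=> m1; rewrite /int_part /prec_part /=.
rewrite eqseq_cons /=; rewrite !andbT; apply/and5P; split; try lia.
Qed.

End MC.
Export MC.
Module MD.
Local Open Scope ring_scope.

Section P2.
Variables (R : realFieldType) (V : nat -> nat -> R) (W : nat -> R).
Hypotheses (V_ge0 : forall n k, 0 <= V n k) (W1 : W 1%N = 1)
  (V_gt0 : forall n k, (1 <= k)%N -> (k <= n)%N -> 0 < V n k)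
  (W_gt0 : forall s, (1 <= s)%N -> 0 < W s).

Lemma size_ip n k s : int_part n k s -> size s = k.
Proof. by case/and4P => /eqP. Qed.

Lemma pos_ip n k s : int_part n k s -> all (fun x => 0 < x)%N s.
Proof. by case/and4P. Qed.

Lemma prod_gt0 (s : seq nat) : all (fun x => 0 < x)%N s -> 0 < \prod_(x <- s) W x.
Proof. by move=> h; rewrite big_seq; apply: prodr_gt0 => x hx; apply: W_gt0; apply: (allP h). Qed.

Lemma averse_iff :
  (forall m, (1 <= m)%N -> f_ratio W m <= f_ratio W m.+1) <->
     (forall n, (1 <= n)%N -> balance_averse (gibbs_eppf V W n) n).
Proof.
split.
  move=> Hf n n1 k s s' hs hs' hp; rewrite /gibbs_eppf (size_ip hs) (size_ip hs').
  apply: ler_wpM2l; first exact: V_ge0.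
  exact: (key W1 W_gt0 Hf n1 hs hs' hp).
move=> H m m1; have /and3P [h1 h2 h3] := ex_parts m1.
have n2 : (1 <= m.+1 + m.+1)%N by lia.
have := H _ n2 2%N _ _ h1 h2 h3.
rewrite /gibbs_eppf (size_ip h1) (size_ip h2) !big_cons !big_nil !mulr1.
rewrite ler_pM2l; last by apply: V_gt0 => //; lia.
move=> h; rewrite /f_ratio divle2 ?W_gt0 //; lia.
Qed.

Lemma seeking_iff :
  (forall m, (1 <= m)%N -> f_ratio W m.+1 <= f_ratio W m) <->
     (forall n, (1 <= n)%N -> balance_seeking (gibbs_eppf V W n) n).
Proof.
have e : forall x y : R, x^-1 / y^-1 = y / x by move=> x y; rewrite invrK mulrC.
split.
  move=> Hf n n1 k s s' hs hs' hp; rewrite /gibbs_eppf (size_ip hs) (size_ip hs').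
  apply: ler_wpM2l; first exact: V_ge0.
  have W1' : (W 1%N)^-1 = 1 by rewrite W1 invr1.
  have Wp' : forall s, (1 <= s)%N -> 0 < (W s)^-1 by move=> x hx; rewrite invr_gt0 W_gt0.
  have Hf' : forall m, (1 <= m)%N -> (W m.+1)^-1 / (W m)^-1 <= (W m.+2)^-1 / (W m.+1)^-1.
    move=> m m1; rewrite !e divle1 ?W_gt0 //; try lia.
    have := Hf m m1; rewrite /f_ratio divle1 ?W_gt0 //; try lia.
    by rewrite mulrC.
  have := key (W := fun x => (W x)^-1) W1' Wp' Hf' n1 hs hs' hp.
  have ps := prod_gt0 (pos_ip hs); have ps' := prod_gt0 (pos_ip hs').
  by rewrite !prodfV lef_pV2 ?posrE.
move=> H m m1; have /and3P [h1 h2 h3] := ex_parts m1.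
have n2 : (1 <= m.+1 + m.+1)%N by lia.
have := H _ n2 2%N _ _ h1 h2 h3.
rewrite /gibbs_eppf (size_ip h1) (size_ip h2) !big_cons !big_nil !mulr1.
rewrite ler_pM2l; last by apply: V_gt0 => //; lia.
move=> h; rewrite /f_ratio divle1 ?W_gt0 //; lia.
Qed.

End P2.


End MD.
Export MD.
End Aux.
Import Aux.

Unset Implicit Arguments. Set Strict Implicit. Set Printing Implicit Defensive.
Local Open Scope ring_scope.

Theorem corollary3p3 (R : realFieldType) (V : nat -> nat -> R) (W : nat -> R)
  (V_ge0 : forall n k, 0 <= V n k) (W_ge0 : forall s, 0 <= W s)
  (V11 : V 1%N 1%N = 1) (W1 : W 1%N = 1)
  (V_gt0 : forall n k, (1 <= k)%N -> (k <= n)%N -> 0 < V n k)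
  (W_gt0 : forall s, (1 <= s)%N -> 0 < W s)
  (Hprob : forall n, (1 <= n)%N -> gibbs_is_prob V W n) :
  (forall (n : nat) (w : seq nat), (1 <= n)%N -> size w = n ->
     0 < gibbs_Pr V W (prefix_event n w) ->
     let k := \max_(x <- w) x in
     exists c : R, 0 < c /\
       forall j : nat,
         cond_prob V W n w j =
         c * (if (1 <= j <= k)%N then f_ratio W (count_mem j w)
              else if j == k.+1 then g_ratio V n k else 0)) /\
  ((forall m, (1 <= m)%N -> f_ratio W m <= f_ratio W m.+1) <->
     (forall n, (1 <= n)%N -> balance_averse (gibbs_eppf V W n) n)) /\
  ((forall m, (1 <= m)%N -> f_ratio W m.+1 <= f_ratio W m) <->
     (forall n, (1 <= n)%N -> balance_seeking (gibbs_eppf V W n) n)).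
Proof.
split; first exact: part1.
split; [exact: averse_iff | exact: seeking_iff].
Qed.
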